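(* Let $d\ge1$, $0<c\le\infty$, $X=(0,c)$, $X_{\mathrm{SYM}}=(-c,0)\cup(0,c)$, $\mathbb{X}=(X_{\mathrm{SYM}})^d$. For $i=1,\dots,d$ let $w_i\in C^2(X)$ be strictly positive, $p_i\in C^2(X)$ real-valued and nonvanishing, $q_i\in C^1(X)$ real-valued, $a_i\ge0$ constants, $\mu_i(dx)=w_i(x)dx$ on $X$, $\delta_i=p_i\frac{d}{dx}+q_i$, $\delta_i^*=-p_i\frac{d}{dx}+q_i-p_i\frac{w_i'}{w_i}-p_i'$, $L_i=a_i+\delta_i^*\delta_i$. Assume for each $i$ there is an orthonormal basis $\{\varphi^{(i)}_k:k\in\mathbb{N}\}$ of $L^2(X,\mu_i)$ with $\varphi^{(i)}_k\in C^\infty(X)$, $L_i\varphi^{(i)}_k=\lambda^{(i)}_k\varphi^{(i)}_k$, $\lambda^{(i)}_0<\lambda^{(i)}_1<\dots\to\infty$, $\delta_i\varphi^{(i)}_k\in L^2(X,\mu_i)$ and $\langle\delta_i\varphi^{(i)}_k,\delta_i\varphi^{(i)}_m\rangle_{\mu_i}=\langle\delta_i^*\delta_i\varphi^{(i)}_k,\varphi^{(i)}_m\rangle_{\mu_i}$ for all $k,m$; assume moreover $a_i=\lambda^{(i)}_0$ for every $i$. Extend $w_i,p_i,\varphi^{(i)}_k$ evenly and $q_i$ oddly to $X_{\mathrm{SYM}}$, define $\Phi^{(i)}_n=\frac1{\sqrt2}\varphi^{(i)}_{n/2}$ for even $n$, $\Phi^{(i)}_n=-\frac1{\sqrt2}(\lambda^{(i)}_{(n+1)/2}-a_i)^{-1/2}\delta_i\varphi^{(i)}_{(n+1)/2}$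 for odd $n$, $\Phi_n=\Phi^{(1)}_{n_1}\otimes\cdots\otimes\Phi^{(d)}_{n_d}$ for $n\in\mathbb{N}^d$, with the convention $\Phi_n\equiv0$ if $n\in\mathbb{Z}^d\setminus\mathbb{N}^d$, and $\langle n\rangle_j=\lfloor\frac{n_j+1}2\rfloor$. Let $$D_jf(x)=p_j(x_j)\partial_{x_j}f(x)+q_j(x_j)\tfrac{f(x)+f(\sigma_jx)}{2}+\Big[p_j(x_j)\tfrac{w_j'(x_j)}{w_j(x_j)}+p_j'(x_j)-q_j(x_j)\Big]\tfrac{f(x)-f(\sigma_jx)}{2}$$ ($\sigma_j$ the reflection changing the sign of the $j$th coordinate), and for $\ell\in\mathbb{N}^d$ let $D^\ell=D_1^{\ell_1}\cdots D_d^{\ell_d}$. Then for every $\ell\in\mathbb{N}^d\setminus\{(0,\dots,0)\}$ and $n\in\mathbb{N}^d$, $$D^\ell\Phi_n=(-1)^{|\ell|/2+|(n+1/2)\widetilde{\ell}|}\Big(\prod_{j=1}^d\big(\lambda^{(j)}_{\langle n\rangle_j}-a_j\big)^{\ell_j/2}\Big)\Phi_{n-(-1)^n\widetilde{\ell}},$$ where $|\ell|=\ell_1+\dots+\ell_d$, $\widetilde{\ell}\in\{0,1\}^d$ has $\widetilde{\ell}_j=0$ if $\ell_j$ is even and $\widetilde{\ell}_j=1$ if $\ell_j$ is odd, $(-1)^n\widetilde{\ell}=((-1)^{n_1}\widetilde{\ell}_1,\dots,(-1)^{n_d}\widetilde{\ell}_d)$ and $|(n+1/2)\widetilde{\ell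}|=\sum_{j=1}^d(n_j+1/2)\widetilde{\ell}_j$.
   Context: $\mathbb{N}=\{0,1,2,\dots\}$; $\lfloor\cdot\rfloor$ is the floor function. The exponent $|\ell|/2+|(n+1/2)\widetilde\ell|$ is always an integer. *)

(* Defs.v *)
From HB Require Import structures.
From mathcomp Require Import all_boot all_order all_algebra.
From mathcomp Require Import all_classical all_reals all_analysis.
Set Implicit Arguments. Unset Strict Implicit. Unset Printing Implicit Defensive.
Import Order.TTheory GRing.Theory Num.Theory.
Import numFieldNormedType.Exports.
Local Open Scope classical_set_scope.
Local Open Scope ring_scope.

Section Defs.
Variable R : realType.

Definition Xint (c : \bar R) : set R := [set x | 0 < x /\ (x%:E < c)%E].
Definition Xsym (c : \bar R) : set R := [set x | x != 0 /\ Xint c `|x|].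
Definition Xbb (d : nat) (c : \bar R) : set 'rV[R]_d :=
  [set x | forall j : 'I_d, Xsym c (x ord0 j)].

Definition C1_on (D : set R) (f : R -> R) :=
  forall x, D x -> derivable f x 1 /\ {for x, continuous (derive1 f)}.
Definition C2_on (D : set R) (f : R -> R) :=
  forall x, D x -> [/\ derivable f x 1, derivable (derive1 f) x 1
                     & {for x, continuous (derive1 (derive1 f))}].
Definition Cinf_on (D : set R) (f : R -> R) :=
  forall (n : nat) x, D x -> derivable (derive1n n f) x 1.

Definition inner (D : set R) (w f g : R -> R) : \bar R :=
  (\int[lebesgue_measure]_(x in D) (f x * g x * w x)%:E)%E.
Definition L2 (D : set R) (w f : R -> R) : Prop :=
  measurable_fun D f /\ (inner D w f f < +oo)%E.

Definition ONB (D : set R) (w : R -> R) (phi : nat -> R -> R) : Prop :=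
  [/\ forall k, L2 D w (phi k),
      forall k m, inner D w (phi k) (phi m) = ((k == m)%:R)%:E
    & forall f, L2 D w f -> (forall k, inner D w f (phi k) = 0%E) ->
        inner D w f f = 0%E].

Definition delta (p q f : R -> R) : R -> R :=
  fun x => p x * derive1 f x + q x * f x.
Definition delta_star (w p q g : R -> R) : R -> R :=
  fun x => - p x * derive1 g x + q x * g x
           - p x * (derive1 w x / w x) * g x - derive1 p x * g x.
Definition Lop (a : R) (w p q f : R -> R) : R -> R :=
  fun x => a * f x + delta_star w p q (delta p q f) x.

(* even / odd extensions to X_SYM (values at 0 / outside X_SYM are irrelevant) *)
Definition ev (f : R -> R) : R -> R := fun x => f `|x|.
Definition od (f : R -> R) : R -> R := fun x => if 0 <= x then f x else - f (- x).

Definition Phi1 (w p q : R -> R) (a : R) (lam : nat -> R) (phi : nat -> R -> R)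
    (n : nat) : R -> R :=
  if ~~ odd n then fun x => (Num.sqrt 2)^-1 * ev (phi n./2) x
  else fun x => - (Num.sqrt 2)^-1 * (Num.sqrt (lam (n.+1)./2 - a))^-1
                  * od (delta p q (phi (n.+1)./2)) x.

Definition PhiZ (d : nat) (w p q : 'I_d -> R -> R) (a : 'I_d -> R)
    (lam : 'I_d -> nat -> R) (phi : 'I_d -> nat -> R -> R)
    (m : 'I_d -> int) : 'rV[R]_d -> R :=
  fun x => if [forall j, (0 <= m j)%R]
           then \prod_(j < d) Phi1 (w j) (p j) (q j) (a j) (lam j) (phi j)
                   `|m j|%N (x ord0 j)
           else 0.

Definition PhiN (d : nat) w p q a lam phi (n : 'I_d -> nat) : 'rV[R]_d -> R :=
  @PhiZ d w p q a lam phi (fun j => (n j)%:Z).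

Definition upd (d : nat) (x : 'rV[R]_d) (j : 'I_d) (t : R) : 'rV[R]_d :=
  \row_k (if k == j then t else x ord0 k).
Definition refl (d : nat) (j : 'I_d) (x : 'rV[R]_d) := upd x j (- x ord0 j).
Definition partial (d : nat) (j : 'I_d) (f : 'rV[R]_d -> R) (x : 'rV[R]_d) : R :=
  derive1 (fun t => f (upd x j t)) (x ord0 j).

Definition Dop (d : nat) (w p q : 'I_d -> R -> R) (j : 'I_d)
    (f : 'rV[R]_d -> R) : 'rV[R]_d -> R :=
  fun x =>
    let t := x ord0 j in
    let W := ev (w j) in let P := ev (p j) in let Q := od (q j) in
    P t * partial j f x
    + Q t * ((f x + f (refl j x)) / 2)
    + (P t * (derive1 W t / W t) + derive1 P t - Q t) * ((f x - f (refl j x)) / 2).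

Definition Dpow (d : nat) (w p q : 'I_d -> R -> R) (l : 'I_d -> nat)
    (f : 'rV[R]_d -> R) : 'rV[R]_d -> R :=
  foldr (fun j g => iter (l j) (Dop w p q j) g) f (enum 'I_d).

End Defs.

(* Main.v *)
Require Import Defs.
From HB Require Import structures.
From mathcomp Require Import all_boot all_order all_algebra.
From mathcomp Require Import all_classical all_reals all_analysis.
Import Order.TTheory GRing.Theory Num.Theory.
Import numFieldNormedType.Exports.
Local Open Scope classical_set_scope.
Local Open Scope ring_scope.
From mathcomp Require Import ring lra measurable_realfun.

Set Implicit Arguments. Unset Strict Implicit.
Section Aux.
Context {R : realType}.
Implicit Types (f g h : R -> R) (t : R).

Lemma open_Xint (c : \bar R) : open (Xint c).
Proof.
have -> : Xint c = [set x | 0 < x] `&` [set x : R | (x%:E < c)%E] by [].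
apply: openI; first exact: open_gt.
case: c => [r||].
- have -> : [set x : R | (x%:E < r%:E)%E] = [set x | x < r].
    by apply/seteqP; split => x /=; rewrite lte_fin.
  exact: open_lt.
- have -> : [set x : R | (x%:E < +oo)%E] = setT.
    by apply/seteqP; split => x //= _; rewrite ltry.
  exact: openT.
- have -> : [set x : R | (x%:E < -oo)%E] = set0.
    by apply/seteqP; split => x //=; rewrite ltNge leNye.
  exact: open0.
Qed.

Lemma near_pos t : 0 < t -> \forall y \near t, 0 < y.
Proof. move=> t0; have := @open_gt R 0 t t0; exact. Qed.

Lemma near_neg t : t < 0 -> \forall y \near t, y < 0.
Proof. move=> t0; have := @open_lt R 0 t t0; exact. Qed.

Lemma derive1_neg t : derive1 (fun y : R => - y) t = -1.
Proof.
rewrite derive1E.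
have -> : (fun y : R => - y) = - (id : R -> R) by [].
rewrite deriveN; last exact: (@derivable_id _ _ t 1).
by rewrite derive_val.
Qed.

Lemma derivable_neg t : derivable (fun y : R => - y) t 1.
Proof. exact: (@derivableN _ _ _ (id : R -> R) t 1 (@derivable_id _ _ t 1)). Qed.

Lemma ev_pos f t : 0 < t -> derivable f t 1 ->
  derivable (ev f) t 1 /\ derive1 (ev f) t = derive1 f t.
Proof.
move=> t0 df.
have nr : \forall y \near t, f y = ev f y.
  by near=> y; rewrite /ev gtr0_norm //; near: y; exact: near_pos.
split; first exact: near_eq_derivable nr df.
by rewrite !derive1E; apply/esym/near_eq_derive.
Unshelve. all: by end_near. Qed.

Lemma ev_neg f t : t < 0 -> derivable f (- t) 1 ->
  derivable (ev f) t 1 /\ derive1 (ev f) t = - derive1 f (- t).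
Proof.
move=> t0 df.
have nr : \forall y \near t, (f \o (fun y => - y)) y = ev f y.
  by near=> y; rewrite /ev ltr0_norm //; near: y; exact: near_neg.
have dc : derivable (f \o (fun y => - y)) t 1.
  apply/derivable1_diffP; apply: differentiable_comp.
    exact/derivable1_diffP/derivable_neg.
  exact/derivable1_diffP.
split; first exact: near_eq_derivable nr dc.
have -> : derive1 (ev f) t = derive1 (f \o (fun y => - y)) t.
  by rewrite !derive1E; apply/esym/near_eq_derive.
rewrite (@derive1_comp _ (fun y => - y) f t (@derivable_neg t) df).
  by rewrite derive1_neg mulrN1.
Unshelve. all: by end_near. Qed.

Lemma od_pos f t : 0 < t -> derivable f t 1 ->
  derivable (od f) t 1 /\ derive1 (od f) t = derive1 f t.
Proof.
move=> t0 df.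
have nr : \forall y \near t, f y = od f y.
  by near=> y; rewrite /od ifT // ltW //; near: y; exact: near_pos.
split; first exact: near_eq_derivable nr df.
by rewrite !derive1E; apply/esym/near_eq_derive.
Unshelve. all: by end_near. Qed.

Lemma od_neg f t : t < 0 -> derivable f (- t) 1 ->
  derivable (od f) t 1 /\ derive1 (od f) t = derive1 f (- t).
Proof.
move=> t0 df.
have nr : \forall y \near t, (- (f \o (fun y => - y))) y = od f y.
  near=> y; rewrite /od ifF //; apply/negbTE; rewrite -ltNge.
  by near: y; exact: near_neg.
have dc : derivable (f \o (fun y => - y)) t 1.
  apply/derivable1_diffP; apply: differentiable_comp.
    exact/derivable1_diffP/derivable_neg.
  exact/derivable1_diffP.
split; first exact: near_eq_derivable nr (derivableN dc).
have -> : derive1 (od f) t = derive1 (- (f \o (fun y => - y))) t.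
  by rewrite !derive1E; apply/esym/near_eq_derive.
rewrite derive1E deriveN // -derive1E.
rewrite (@derive1_comp _ (fun y => - y) f t (@derivable_neg t) df).
  by rewrite derive1_neg mulrN1 opprK.
Unshelve. all: by end_near. Qed.


Lemma dMD (f1 g1 f2 g2 : R -> R) u : derivable f1 u 1 -> derivable g1 u 1 ->
  derivable f2 u 1 -> derivable g2 u 1 ->
  derivable (fun x => f1 x * g1 x + f2 x * g2 x) u 1.
Proof. move=> h1 h2 h3 h4; exact: (derivableD (derivableM h1 h2) (derivableM h3 h4)). Qed.

Lemma dsc (g : R -> R) r t : derivable g t 1 ->
  derivable (fun x => r * g x) t 1 /\ derive1 (fun x => r * g x) t = r * derive1 g t.
Proof.
move=> dg; split; first exact: (derivableM (derivable_cst r t 1) dg).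
rewrite derive1E (deriveM (derivable_cst r t 1) dg).
by rewrite derive_cst scaler0 addr0 -derive1E.
Qed.

Lemma Xsym_cases (c : \bar R) t : Xsym c t ->
  (0 < t /\ Xint c t) \/ (t < 0 /\ Xint c (- t)).
Proof.
case=> tn0 Xt; move: tn0; rewrite neq_lt => /orP[t0|t0].
  by right; split => //; rewrite ltr0_norm in Xt.
by left; split => //; rewrite gtr0_norm in Xt.
Qed.

Lemma Xsym_near (c : \bar R) t : Xsym c t -> \forall u \near t, Xsym c u.
Proof.
move=> St; case: (Xsym_cases St) => [[t0 Xt]|[t0 Xt]].
- have H1 := near_pos t0; have H2 := open_Xint Xt.
  near=> u; have u0 : 0 < u by near: u.
  split; first by rewrite gt_eqF.
  by rewrite gtr0_norm //; near: u.
- have H1 := near_neg t0; have H2 := open_Xint Xt.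
  rewrite nbhsN in H2.
  near=> u; have u0 : u < 0 by near: u.
  split; first by rewrite lt_eqF.
  by rewrite ltr0_norm //; near: u.
Unshelve. all: by end_near. Qed.

End Aux.
Unset Implicit Arguments.
Definition nxt k := if odd k then k.+1 else k.-1.

Lemma nat_cases k : (0 < k)%N -> exists m, k = m.*2.+1 \/ k = m.+1.*2.
Proof.
move=> k0; have E := odd_double_half k.
case: (odd k) E => E.
  by exists k./2; left; rewrite -{1}E add1n.
move: E k0; case: (k./2) => [|m] /= E; first by rewrite -E.
by exists m; right; rewrite -E.
Qed.

Lemma nxt_props k : (0 < k)%N ->
  [/\ (0 < nxt k)%N, (nxt k).+1./2 = k.+1./2, odd (nxt k) = ~~ odd k
    & nxt (nxt k) = k].
Proof.
move=> /nat_cases [m [->|->]]; rewrite /nxt.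
- rewrite /= odd_double /=.
  rewrite -!doubleS !odd_double /=.
  by rewrite !doubleK /= ?uphalf_double.
- rewrite doubleS /= odd_double /=.
  by rewrite odd_double /= uphalf_double doubleK.
Qed.

Lemma iter_props i k : (0 < k)%N ->
  (0 < iter i nxt k)%N /\ (iter i nxt k).+1./2 = k.+1./2.
Proof.
move=> k0; elim: i => [|i [IH1 IH2]] //; rewrite iterS.
by have [h1 h2 _ _] := nxt_props _ IH1; rewrite h2.
Qed.

Lemma iter_odd i k : (0 < k)%N -> odd (iter i nxt k) = odd k (+) odd i.
Proof.
move=> k0; elim: i => [|i IH]; first by rewrite addbF.
rewrite iterS; have [h _] := iter_props i k k0; have [_ _ -> _] := nxt_props _ h.
by rewrite IH addbN.
Qed.

Lemma iter_val i k : (0 < k)%N -> iter i nxt k = if odd i then nxt k else k.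
Proof.
move=> k0; elim: i => [|i IH] //; rewrite iterS IH /=.
have [_ _ _ h] := nxt_props k k0.
by case: (odd i).
Qed.

Section Coef.
Variable R : realType.
Variables (a : R) (lam : nat -> R).
Definition cf k := (if odd k then 1 else -1) * Num.sqrt (lam (k.+1)./2 - a).

Lemma sgS k : (-1) ^+ k.+1 = (if odd k then 1 else -1 : R).
Proof. by rewrite -signr_odd /=; case: (odd k). Qed.

Lemma half_e l k : ((l.+2 + (2 * k + 1) * odd l.+2)./2 = ((l + (2 * k + 1) * odd l)./2).+1)%N.
Proof. by rewrite /= negbK. Qed.

Lemma coefQ' (S : R) k :
  (forall i, cf (iter i nxt k) = (if odd k (+) odd i then 1 else -1) * S) ->
  forall l, \prod_(i < l) cf (iter i nxt k) =
  (-1) ^+ ((l + (2 * k + 1) * odd l)./2) * S ^+ l.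
Proof.
move=> cfi.
suff : forall l, (\prod_(i < l) cf (iter i nxt k) =
  (-1) ^+ ((l + (2 * k + 1) * odd l)./2) * S ^+ l) /\
  (\prod_(i < l.+1) cf (iter i nxt k) =
  (-1) ^+ ((l.+1 + (2 * k + 1) * odd l.+1)./2) * S ^+ l.+1).
  by move=> H l; case: (H l).
elim => [|l [IH1 IH2]].
  split; first by rewrite big_ord0 /= muln0 expr0 mulr1.
  rewrite big_ord1 cfi /= add0n muln1 addn1 /= mul2n doubleK sgS addbF expr1.
  by [].
split => //.
rewrite !big_ord_recr /= IH1 negbK cfi -iterS cfi /= addbN.
by case: (odd k (+) odd l); rewrite /= !exprS; move: ((-1) ^+ _ : R) (S ^+ l) => E T; ring.
Qed.

Lemma coefQ k : (0 < k)%N -> forall l,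
  \prod_(i < l) cf (iter i nxt k) =
  (-1) ^+ ((l + (2 * k + 1) * odd l)./2) * Num.sqrt (lam (k.+1)./2 - a) ^+ l.
Proof.
move=> k0; apply: coefQ' => i.
by rewrite /cf (iter_props i k k0).2 (iter_odd i k k0).
Qed.
End Coef.

Lemma delta0 (R : realType) (c : \bar R) (w p q : R -> R) (phi0 : R -> R) :
  C2_on (Xint c) w -> (forall x, Xint c x -> 0 < w x) -> C2_on (Xint c) p ->
  C1_on (Xint c) q -> Cinf_on (Xint c) phi0 ->
  (forall x, Xint c x -> delta_star w p q (delta p q phi0) x = 0) ->
  inner (Xint c) w (delta p q phi0) (delta p q phi0) =
    inner (Xint c) w (delta_star w p q (delta p q phi0)) phi0 ->
  forall u, Xint c u -> delta p q phi0 u = 0.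
Proof.
move=> hw wpos hp hq hphi hs hin u0 Xu0.
set X := Xint c.
set h := delta p q phi0.
have dh u : X u -> derivable h u 1.
  move=> Xu; have [dp _ _] := hp u Xu; have [dq _] := hq u Xu.
  exact: (derivableD (derivableM dp (hphi 1%N u Xu)) (derivableM dq (hphi 0%N u Xu))).
pose g := fun x => h x * h x * w x.
have dg u : X u -> derivable g u 1.
  move=> Xu; have [dw _ _] := hw u Xu.
  exact: (derivableM (derivableM (dh u Xu) (dh u Xu)) dw).
have cg u : X u -> {for u, continuous g}.
  move=> Xu; exact/differentiable_continuous/derivable1_diffP/dg.
have mX : measurable X by apply: open_measurable; exact: open_Xint.
have mg : measurable_fun X (fun x => (g x)%:E).
  apply/measurable_EFinP; apply: open_continuous_measurable_fun; first exact: open_Xint.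
  by move=> x; rewrite inE => Xx; exact: cg.
have I0 : (\int[lebesgue_measure]_(x in X) (g x)%:E = 0)%E.
  have -> : (\int[lebesgue_measure]_(x in X) (g x)%:E =
     inner X w (delta p q phi0) (delta p q phi0))%E by [].
  rewrite hin /inner (eq_integral (cst 0%E)) ?integral0 //.
  by move=> x; rewrite inE => Xx; rewrite hs // !mul0r.
have [//|hn] := eqVneq (h u0) 0; exfalso.
have gpos : 0 < g u0.
  rewrite /g mulr_gt0 ?wpos //.
  by rewrite -expr2 exprn_even_gt0.
pose e := g u0 / 2.
have e0 : 0 < e by rewrite /e divr_gt0.
have Hn : \forall u \near u0, X u /\ e < g u.
  have H1 := open_Xint Xu0.
  have eg : e < g u0.
    by rewrite /e ltr_pdivrMr // ltr_pMr // ltr1n.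
  have H2 := @cvgr_gt R _ _ _ g (g u0) (cg u0 Xu0) e eg.
  near=> u; split; first by near: u.
  by near: u; apply: H2.
have [r /= r0 Hr] := (nbhs_ballP _ _).1 Hn.
have mB : measurable (ball u0 r) by exact: measurable_ball.
have BX : ball u0 r `<=` X by move=> x /Hr [].
have : ((e * (r *+ 2))%:E <= 0)%E.
  rewrite -I0.
  apply: (@le_trans _ _ (\int[lebesgue_measure]_(x in ball u0 r) (g x)%:E)%E).
    rewrite EFinM -(lebesgue_measure_ball u0 (ltW r0)) -integral_cst //.
    apply: ge0_le_integral => //.
    - by move=> x _; rewrite lee_fin ltW.
    - exact: (measurable_funS mX BX mg).
    - by move=> x /Hr [_ /ltW]; rewrite lee_fin.
  apply: ge0_subset_integral => //.
  move=> x Xx; rewrite lee_fin /g mulr_ge0 //; last exact/ltW/wpos.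
  by rewrite -expr2 sqr_ge0.
rewrite lee_fin leNgt => /negP; apply.
by rewrite mulr_gt0 // pmulrn_lgt0.
Unshelve. all: by end_near. Qed.




Section Alg.
Variable R : realType.
Lemma alg5 (P Q B s Rr F' F Fm G cfv : R) :
  P*F' + Q*((F+Fm)/2) + B*((F-Fm)/2) = cfv*G ->
  P*((s*Rr)*F') + Q*((s*(F*Rr) + s*(Fm*Rr))/2) + B*((s*(F*Rr) - s*(Fm*Rr))/2) = s*cfv*(G*Rr).
Proof.
move=> E; have -> : s*cfv*(G*Rr) = s*Rr*(cfv*G) by ring.
by rewrite -E; field.
Qed.
Lemma alg1 (P Q G G' r A B : R) : P * (r * - G') + - Q * ((r*G + r*G)/2) + (P*A + B - - Q) * ((r*G - r*G)/2) = r * - (P*G' + Q*G).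
Proof. by field. Qed.
Lemma alg2 (P Q G G' r A B : R) : P * (r * G') + Q * ((r*G + r*G)/2) + (P*A + B - Q)*((r*G - r*G)/2) = r * (P*G' + Q*G).
Proof. by field. Qed.
Lemma alg3 (P Q H H' r Wd Wi Pd : R) : P * (r * H') + - Q * ((r * - H + r * H)/2) + (P * (- Wd * Wi) - Pd + Q) * ((r * - H - r*H)/2) = - r * (- P * H' + Q*H - P * (Wd * Wi) * H - Pd * H).
Proof. by field. Qed.
Lemma alg4 (P Q H H' r Wd Wi Pd : R) : P * (r*H') + Q*((r*H + r * - H)/2) + (P*(Wd*Wi) + Pd - Q) * ((r*H - r * - H)/2) = - r * (- P * H' + Q * H - P*(Wd*Wi)*H - Pd * H).
Proof. by field. Qed.
End Alg.

Section D1gen.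
Variable R : realType.
Variables (w p q : R -> R).
Definition D1 (G : R -> R) t :=
  ev p t * derive1 G t + od q t * ((G t + G (- t)) / 2)
  + (ev p t * (derive1 (ev w) t / ev w t) + derive1 (ev p) t - od q t)
    * ((G t - G (- t)) / 2).

Lemma D1_ev (g : R -> R) r t : t != 0 -> derivable g `|t| 1 ->
  D1 (fun x => r * ev g x) t = r * od (delta p q g) t.
Proof.
rewrite neq_lt => /orP[t0|t0] dg.
- rewrite ltr0_norm // in dg.
  rewrite /D1 (dsc r (ev_neg t0 dg).1).2 (ev_neg t0 dg).2.
  have hn : (0 <= t) = false by apply/negbTE; rewrite -ltNge.
  rewrite /ev /od /delta normrN !ltr0_norm // hn.
  exact: alg1.
- rewrite gtr0_norm // in dg.
  rewrite /D1 (dsc r (ev_pos t0 dg).1).2 (ev_pos t0 dg).2.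
  have hn : (0 <= t) = true by exact: ltW.
  rewrite /ev /od /delta normrN !gtr0_norm // hn.
  exact: alg2.
Qed.

Lemma D1_od (h : R -> R) r t : t != 0 -> derivable h `|t| 1 ->
  derivable w `|t| 1 -> derivable p `|t| 1 ->
  D1 (fun x => r * od h x) t = - r * ev (delta_star w p q h) t.
Proof.
rewrite neq_lt => /orP[t0|t0] dh dw dp.
- rewrite ltr0_norm // in dh dw dp.
  rewrite /D1 (dsc r (od_neg t0 dh).1).2 (od_neg t0 dh).2.
  rewrite (ev_neg t0 dw).2 (ev_neg t0 dp).2.
  have t0' : 0 <= - t by rewrite oppr_ge0 ltW.
  have hn : (0 <= t) = false by apply/negbTE; rewrite -ltNge.
  rewrite /ev /od /delta_star ltr0_norm // hn t0' opprK.
  exact: alg3.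
- rewrite gtr0_norm // in dh dw dp.
  rewrite /D1 (dsc r (od_pos t0 dh).1).2 (od_pos t0 dh).2.
  rewrite (ev_pos t0 dw).2 (ev_pos t0 dp).2.
  have t0' : ~~ (0 <= - t) by rewrite -ltNge oppr_lt0.
  have hn : (0 <= t) = true by exact: ltW.
  rewrite /ev /od /delta_star gtr0_norm // hn (negbTE t0') opprK.
  exact: alg4.
Qed.
End D1gen.

Unset Implicit Arguments.
Section OneD.
Variable R : realType.
Variables (c : \bar R) (w p q : R -> R) (a : R) (lam : nat -> R) (phi : nat -> R -> R).
Hypothesis hw : C2_on (Xint c) w.
Hypothesis wpos : forall x, Xint c x -> 0 < w x.
Hypothesis hp : C2_on (Xint c) p.
Hypothesis hq : C1_on (Xint c) q.
Hypothesis hphi : forall k, Cinf_on (Xint c) (phi k).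
Hypothesis hL : forall k x, Xint c x -> Lop a w p q (phi k) x = lam k * phi k x.
Hypothesis hlam : {homo lam : k m / (k < m)%N >-> k < m}.
Hypothesis ha : a = lam 0.
Hypothesis hd0 : forall u, Xint c u -> delta p q (phi 0) u = 0.

Let X := Xint c.

Lemma dphi k u : X u -> derivable (phi k) u 1.
Proof. by move=> Xu; exact: (hphi k 0 u Xu). Qed.

Lemma ddphi k u : X u -> derivable (derive1 (phi k)) u 1.
Proof. by move=> Xu; exact: (hphi k 1 u Xu). Qed.

Lemma ddelta k u : X u -> derivable (delta p q (phi k)) u 1.
Proof.
move=> Xu; have [dp _ _] := hp u Xu; have [dq _] := hq u Xu.
exact: (dMD dp (ddphi k u Xu) dq (dphi k u Xu)).
Qed.

Lemma dstar k u : X u ->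
  delta_star w p q (delta p q (phi k)) u = (lam k - a) * phi k u.
Proof. move=> Xu; have := hL k u Xu; rewrite /Lop => E; rewrite mulrBl -E; ring. Qed.

Lemma lam_gt m : (0 < m)%N -> 0 < lam m - a.
Proof. by move=> m0; rewrite ha subr_gt0; exact: hlam. Qed.

Definition F k := Phi1 w p q a lam phi k.
Lemma F_derivable k t : Xsym c t -> derivable (F k) t 1.
Proof.
move=> /Xsym_cases [[t0 Xt]|[t0 Xt]]; rewrite /F /Phi1; case: ifP => _.
- by apply: (dsc _ (ev_pos t0 (dphi _ _ Xt)).1).1.
- by apply: (dsc _ (od_pos t0 (ddelta _ _ Xt)).1).1.
- by apply: (dsc _ (ev_neg t0 (dphi _ _ Xt)).1).1.
- by apply: (dsc _ (od_neg t0 (ddelta _ _ Xt)).1).1.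
Qed.

Lemma half_dbl1 m : (m.*2).+1./2 = m.
Proof. exact: (half_bit_double m true). Qed.
Lemma half_dbl2 m : (m.*2).+2./2 = m.+1.
Proof. by rewrite -doubleS doubleK. Qed.

Lemma F_even m : F (m.*2) = fun x => (Num.sqrt 2)^-1 * ev (phi m) x.
Proof. by rewrite /F /Phi1 odd_double /= doubleK. Qed.

Lemma F_odd m : F (m.*2.+1) = fun x =>
  (- (Num.sqrt 2)^-1 * (Num.sqrt (lam m.+1 - a))^-1) * od (delta p q (phi m.+1)) x.
Proof. by rewrite /F /Phi1 /= odd_double /= doubleK. Qed.

Lemma sqrt_sq m : (0 < m)%N -> Num.sqrt (lam m - a) ^+ 2 = lam m - a /\ Num.sqrt (lam m - a) != 0.
Proof.
move=> m0; have h := lam_gt m m0; split; first by rewrite sqr_sqrtr // ltW.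
by rewrite sqrtr_eq0 -ltNge.
Qed.

Lemma D1_F k t : Xsym c t -> D1 R w p q (F k) t = cf R a lam k * F (nxt k) t.
Proof.
move=> St; have [tn0 Xt] := St.
have [dw _ _] := hw _ Xt; have [dp _ _] := hp _ Xt.
move: (odd_double_half k); case: (odd k); move: (k./2) => m <-.
- rewrite add1n F_odd (@D1_od _ w p q _ _ t tn0 (ddelta _ _ Xt) dw dp).
  rewrite /nxt /cf /= odd_double /= doubleK -doubleS F_even.
  rewrite /ev (dstar _ _ Xt).
  have [s2 s0] := sqrt_sq m.+1 (ltn0Sn _).
  move: s2 s0; set s := Num.sqrt _ => s2 s0.
  have s20 : Num.sqrt 2 != 0 :> R by rewrite sqrtr_eq0 -ltNge.
  rewrite -s2; field; by rewrite s20 s0.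
- rewrite add0n F_even (@D1_ev _ w p q _ _ t tn0 (dphi _ _ Xt)).
  rewrite /nxt /cf odd_double /= uphalf_double.
  case: m => [|m].
  + rewrite -ha subrr sqrtr0 mulr0 mul0r.
    move: (hd0 _ Xt); rewrite /od; case: ifP => t0.
      by rewrite ger0_norm // => ->; rewrite mulr0.
    have t0' : t <= 0 by rewrite le_eqVlt ltNge t0 orbT.
    by rewrite ler0_norm // => ->; rewrite oppr0 mulr0.
  + rewrite doubleS /= F_odd.
    have [s2 s0] := sqrt_sq m.+1 (ltn0Sn _).
    move: s2 s0; set s := Num.sqrt _ => s2 s0.
    have s20 : Num.sqrt 2 != 0 :> R by rewrite sqrtr_eq0 -ltNge.
    field; by rewrite s20 s0.
Qed.

End OneD.

Section Multi.
Variable R : realType.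
Variables (d : nat) (c : \bar R) (w p q : 'I_d -> R -> R) (a : 'I_d -> R)
  (lam : 'I_d -> nat -> R) (phi : 'I_d -> nat -> R -> R).

Definition Fi (i : 'I_d) k := F R (w i) (p i) (q i) (a i) (lam i) (phi i) k.

Lemma PhiN_split m (z : 'rV[R]_d) j :
  PhiN w p q a lam phi m z =
  Fi j (m j) (z ord0 j) * \prod_(i < d | i != j) Fi i (m i) (z ord0 i).
Proof.
rewrite /PhiN /PhiZ.
have -> : [forall j0, (0 <= (m j0)%:Z)%R] = true by apply/forallP => j0.
by rewrite (bigD1 j).
Qed.

Lemma upd_j (y : 'rV[R]_d) j t : upd y j t ord0 j = t.
Proof. by rewrite /upd mxE eqxx. Qed.

Lemma upd_i (y : 'rV[R]_d) j t i : i != j -> upd y j t ord0 i = y ord0 i.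
Proof. by move=> ij; rewrite /upd mxE (negbTE ij). Qed.

Definition upd' (m : 'I_d -> nat) j v := fun i => if i == j then v else m i.

Hypothesis hw : forall i, C2_on (Xint c) (w i) /\ forall x, Xint c x -> 0 < w i x.
Hypothesis hp : forall i, C2_on (Xint c) (p i) /\ forall x, Xint c x -> p i x != 0.
Hypothesis hq : forall i, C1_on (Xint c) (q i).
Hypothesis hphi : forall i k, Cinf_on (Xint c) (phi i k).
Hypothesis hL : forall i k x, Xint c x ->
     Lop (a i) (w i) (p i) (q i) (phi i k) x = lam i k * phi i k x.
Hypothesis hlam : forall i, {homo lam i : k m / (k < m)%N >-> k < m}.
Hypothesis ha : forall i, a i = lam i 0%N.
Hypothesis hd0 : forall i u, Xint c u -> delta (p i) (q i) (phi i 0%N) u = 0.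

Lemma Dop_PhiN j s m y : Xbb c y ->
  Dop w p q j (fun z => s * PhiN w p q a lam phi m z) y =
  s * cf R (a j) (lam j) (m j) * PhiN w p q a lam phi (upd' m j (nxt (m j))) y.
Proof.
move=> Yy; have St : Xsym c (y ord0 j) := Yy j.
have key := D1_F R c (w j) (p j) (q j) (a j) (lam j) (phi j) (hw j).1 (hp j).1 (hq j)
  (hphi j) (hL j) (hlam j) (ha j) (hd0 j) (m j) (y ord0 j) St.
set Rr := \prod_(i < d | i != j) Fi i (m i) (y ord0 i).
have E1 u : PhiN w p q a lam phi m (upd y j u) = Fi j (m j) u * Rr.
  rewrite (PhiN_split _ _ j) upd_j; congr (_ * _); apply: eq_bigr => i ij.
  by rewrite upd_i.
have E2 : PhiN w p q a lam phi m y = Fi j (m j) (y ord0 j) * Rr.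
  by rewrite (PhiN_split _ _ j).
have E3 v : PhiN w p q a lam phi (upd' m j v) y = Fi j v (y ord0 j) * Rr.
  rewrite (PhiN_split _ _ j) /upd' eqxx; congr (_ * _); apply: eq_bigr => i ij.
  by rewrite (negbTE ij).
rewrite /Dop /partial /refl /=.
have -> : (fun u => s * PhiN w p q a lam phi m (upd y j u)) =
          (fun u => (s * Rr) * Fi j (m j) u).
  by apply/funext => u; rewrite E1 mulrA mulrAC.
have dF := F_derivable R c (w j) (p j) (q j) (a j) (lam j) (phi j) (hp j).1 (hq j)
  (hphi j) (m j) (y ord0 j) St.
rewrite (dsc (s * Rr) dF).2 E1 E2 E3.
exact: alg5.
Qed.

Lemma Xbb_refl (j : 'I_d) (y : 'rV[R]_d) : Xbb c y -> Xbb c (refl j y).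
Proof.
move=> Yy i; rewrite /refl /upd mxE; case: ifP => _; last exact: Yy.
by have [h1 h2] := Yy j; split; [rewrite oppr_eq0 | rewrite normrN].
Qed.

Lemma Dop_ext (j : 'I_d) (f g : 'rV[R]_d -> R) y : (forall z, Xbb c z -> f z = g z) -> Xbb c y ->
  Dop w p q j f y = Dop w p q j g y.
Proof.
move=> fg Yy; rewrite /Dop /partial.
have H := Xsym_near (Yy j).
have -> : derive1 (fun t => f (upd y j t)) (y ord0 j) =
          derive1 (fun t => g (upd y j t)) (y ord0 j).
  rewrite !derive1E; apply: near_eq_derive.
  near=> u; apply: fg => i; case: (eqVneq i j) => [->|ij].
    by rewrite upd_j; near: u.
  by rewrite upd_i //; exact: Yy.
by rewrite fg // (fg (refl j y)) //; exact: Xbb_refl.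
Unshelve. all: by end_near. Qed.

Lemma iter_Dop (j : 'I_d) k (g : 'rV[R]_d -> R) s m :
  (forall z, Xbb c z -> g z = s * PhiN w p q a lam phi m z) ->
  forall z, Xbb c z -> iter k (Dop w p q j) g z =
   s * (\prod_(i < k) cf R (a j) (lam j) (iter i nxt (m j)))
     * PhiN w p q a lam phi (upd' m j (iter k nxt (m j))) z.
Proof.
move=> gE; elim: k => [|k IH] z Yz.
  have -> : upd' m j (iter 0 nxt (m j)) = m.
    by apply/funext => i; rewrite /upd' /=; case: eqVneq => [->|].
  by rewrite /= big_ord0 mulr1 gE.
rewrite iterS (Dop_ext j _ _ z IH Yz) Dop_PhiN //.
have -> : upd' (upd' m j (iter k nxt (m j))) j (nxt (upd' m j (iter k nxt (m j)) j))
          = upd' m j (iter k.+1 nxt (m j)).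
  apply/funext => i; rewrite /upd' eqxx iterS.
  by case: eqVneq.
by rewrite big_ord_recr /= /upd' eqxx !mulrA.
Qed.

Lemma foldr_Dop (l : 'I_d -> nat) (r : seq 'I_d) n : uniq r -> forall z, Xbb c z ->
  foldr (fun j g => iter (l j) (Dop w p q j) g) (PhiN w p q a lam phi n) r z =
  (\prod_(j <- r) \prod_(i < l j) cf R (a j) (lam j) (iter i nxt (n j)))
  * PhiN w p q a lam phi (fun i => if i \in r then iter (l i) nxt (n i) else n i) z.
Proof.
elim: r => [|j r IH] /=.
  move=> _ z _; rewrite big_nil mul1r.
  by have -> : (fun i : 'I_d => if i \in [::] then iter (l i) nxt (n i) else n i) = n.
case/andP => jr ur z Yz; rewrite big_cons.
rewrite (iter_Dop j (l j) _ _ _ (IH ur) z Yz) ifF; last exact/negbTE.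
have -> : upd' (fun i => if i \in r then iter (l i) nxt (n i) else n i) j
     (iter (l j) nxt (n j)) =
   (fun i => if i \in j :: r then iter (l i) nxt (n i) else n i).
  apply/funext => i; rewrite /upd' in_cons.
  by case: eqVneq => [->|] //=.
by rewrite (mulrC (\prod_(_ <- r) _)).
Qed.

End Multi.

From mathcomp Require Import zify.

Lemma iter_int k l : (k = 0 -> l = 0)%N ->
  ((iter l nxt k)%:Z = k%:Z - (-1) ^+ k * (odd l)%:Z)%R.
Proof.
case: (posnP k) => [->|k0].
  by move=> /(_ erefl) ->; rewrite /= mulr0 subr0.
move=> _; rewrite iter_val //; case: (odd l); last by rewrite /= mulr0 subr0.
rewrite /nxt -signr_odd mulr1; case: (odd k) => /=.
  by rewrite expr1 opprK; lia.
by rewrite expr0; lia.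
Qed.

Lemma half_sum d (e : 'I_d -> nat) : (forall j, ~~ odd (e j)) ->
  ((\sum_(j < d) e j)./2 = \sum_(j < d) (e j)./2)%N.
Proof.
move=> he.
suff [] : (\sum_(j < d) e j)./2 = \sum_(j < d) (e j)./2 /\ ~~ odd (\sum_(j < d) e j) by [].
apply: (big_ind2 (fun x y => x./2 = y /\ ~~ odd x)) => //.
  move=> x1 y1 x2 y2 [h1 o1] [h2 o2]; split.
    by rewrite halfD (negbTE o1) /= h1 h2.
  by rewrite oddD (negbTE o1) (negbTE o2).
Qed.


Theorem mainTheorem6 (R : realType) (d : nat) (c : \bar R)
  (w p q : 'I_d -> R -> R) (a : 'I_d -> R)
  (phi : 'I_d -> nat -> R -> R) (lam : 'I_d -> nat -> R) :
  (1 <= d)%N ->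
  (0 < c)%E ->
  (forall i, C2_on (Xint c) (w i) /\ forall x, Xint c x -> 0 < w i x) ->
  (forall i, C2_on (Xint c) (p i) /\ forall x, Xint c x -> p i x != 0) ->
  (forall i, C1_on (Xint c) (q i)) ->
  (forall i, 0 <= a i) ->
  (forall i, ONB (Xint c) (w i) (phi i)) ->
  (forall i k, Cinf_on (Xint c) (phi i k)) ->
  (forall i k x, Xint c x ->
     Lop (a i) (w i) (p i) (q i) (phi i k) x = lam i k * phi i k x) ->
  (forall i, {homo lam i : k m / (k < m)%N >-> k < m}) ->
  (forall i, lam i n @[n --> \oo] --> +oo) ->
  (forall i k, L2 (Xint c) (w i) (delta (p i) (q i) (phi i k))) ->
  (forall i k m,
     inner (Xint c) (w i) (delta (p i) (q i) (phi i k)) (delta (p i) (q i) (phi i m))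
     = inner (Xint c) (w i)
         (delta_star (w i) (p i) (q i) (delta (p i) (q i) (phi i k))) (phi i m)) ->
  (forall i, a i = lam i 0%N) ->
  forall (l n : 'I_d -> nat), (exists j, l j != 0%N) ->
  forall x : 'rV[R]_d, Xbb c x ->
    Dpow w p q l (PhiN w p q a lam phi n) x =
      (-1) ^+ ((\sum_(j < d) (l j + (2 * n j + 1) * odd (l j)))./2)
      * (\prod_(j < d) Num.sqrt (lam j (n j).+1./2 - a j) ^+ l j)
      * PhiZ w p q a lam phi
          (fun j => (n j)%:Z - (-1) ^+ (n j) * (odd (l j))%:Z) x.
Proof.
move=> d1 c0 hw hp hq ha0 hONB hphi hL hlam hinf hL2 hin ha l n _ x Xx.
have hd0 : forall (i : 'I_d) (u : R), Xint c u ->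
    delta (p i) (q i) (phi i 0%N) u = 0.
  move=> i; apply: (delta0 R c (w i) (p i) (q i) (phi i 0%N)).
  - exact: (hw i).1.
  - exact: (hw i).2.
  - exact: (hp i).1.
  - exact: hq.
  - exact: hphi.
  - move=> y Xy; have := hL i 0%N y Xy; rewrite /Lop (ha i) => E.
    by apply: (addrI (lam i 0%N * phi i 0%N y)); rewrite addr0.
  - exact: hin.
rewrite /Dpow (foldr_Dop R d c w p q a lam phi hw hp hq hphi hL hlam ha hd0 l
  (enum 'I_d) n (enum_uniq _) x Xx).
have -> : (fun i => if i \in enum 'I_d then iter (l i) nxt (n i) else n i) =
          (fun i => iter (l i) nxt (n i)).
  by apply/funext => i; rewrite mem_enum.
rewrite big_enum /=.
have BE : forall F : 'I_d -> R, \prod_(i in 'I_d) F i = \prod_(i < d) F i.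
  by move=> F; apply: eq_bigl => i.
rewrite BE.
have [j0 /andP[/eqP nj0 lj0]|hB] := pickP (fun j => (n j == 0%N) && (l j != 0%N)).
  have P0 : \prod_(i0 < l j0) cf R (a j0) (lam j0) (iter i0 nxt (n j0)) = 0.
    case: (l j0) lj0 => // l' _.
    have cf0 : cf R (a j0) (lam j0) 0 = 0 by rewrite /cf /= (ha j0) subrr sqrtr0 mulr0.
    by rewrite big_ord_recl /= nj0 cf0 mul0r.
  have S0 : Num.sqrt (lam j0 (uphalf (n j0)) - a j0) ^+ l j0 = 0.
    rewrite nj0 /= (ha j0) subrr sqrtr0 expr0n.
    by case: (l j0) lj0.
  rewrite (bigD1 j0) //= P0 mul0r mul0r.
  by rewrite [\prod_(j < d) Num.sqrt _ ^+ _](bigD1 j0) //= S0 mul0r mulr0 mul0r.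
have hB' : forall j, n j = 0%N -> l j = 0%N.
  move=> j nj; have := hB j; rewrite nj eqxx /=.
  by move/negbFE/eqP.
have Pj : forall j, \prod_(i0 < l j) cf R (a j) (lam j) (iter i0 nxt (n j)) =
   (-1) ^+ ((l j + (2 * n j + 1) * odd (l j))./2) *
   Num.sqrt (lam j (n j).+1./2 - a j) ^+ l j.
  move=> j; case: (posnP (n j)) => [nj|nj].
    by rewrite (hB' j nj) big_ord0 /= muln0 !expr0 mulr1.
  exact: (coefQ R (a j) (lam j) (n j) nj (l j)).
rewrite (eq_bigr _ (fun j _ => Pj j)) big_split /= prodrXr -half_sum; last first.
  move=> j; rewrite oddD oddM oddD mul2n odd_double /=.
  by case: (odd (l j)).
have -> : (fun j => (n j)%:Z - (-1) ^+ n j * (odd (l j))%:Z)%R =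
          (fun j => (iter (l j) nxt (n j))%:Z).
  by apply/funext => j; rewrite iter_int //; exact: hB'.
by [].
Qed.
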